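(* Let $R$ be a Bézout domain and let $A,B,C\in R^{n\times n}$ satisfy $ABA=ACA$. If $AB$ and $CA$ are group invertible, then $(AB)(AB)^{\#}$ is similar to $(CA)(CA)^{\#}$.
   Context: A Bézout domain is an integral domain in which every finitely generated ideal is principal. A matrix $M\in R^{n\times n}$ is group invertible if there exists $X\in R^{n\times n}$ with $MX=XM$, $XMX=X$, $MXM=M$; such $X$ is unique and denoted $M^{\#}$. Two matrices $M,N\in R^{n\times n}$ are similar if $M=S^{-1}NS$ for some invertible $S\in R^{n\times n}$. *)

(* Defs.v *)
From mathcomp Require Import all_boot all_algebra.
Set Implicit Arguments. Unset Strict Implicit. Unset Printing Implicit Defensive.
Import GRing.Theory.
Local Open Scope ring_scope.

Definition in_fg_ideal (R : comRingType) (s : seq R) (x : R) : Prop :=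
  exists c : 'I_(size s) -> R, x = \sum_(i < size s) c i * s`_i.

Definition bezout_domain (R : idomainType) : Prop :=
  forall s : seq R, exists d : R,
    forall x : R, in_fg_ideal s x <-> exists r : R, x = r * d.

Definition is_group_inverse (R : ringType) (n : nat) (M X : 'M[R]_n) : Prop :=
  [/\ M *m X = X *m M, X *m M *m X = X & M *m X *m M = M].

Definition group_invertible (R : ringType) (n : nat) (M : 'M[R]_n) : Prop :=
  exists X, is_group_inverse M X.

Definition similar_mx (R : comUnitRingType) (n : nat) (M N : 'M[R]_n) : Prop :=
  exists2 S : 'M[R]_n, S \in unitmx & M = invmx S *m N *m S.

(* Main.v *)
Require Import Defs.
From mathcomp Require Import all_boot all_algebra.
Set Implicit Arguments. Unset Strict Implicit. Unset Printing Implicit Defensive.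
Import GRing.Theory.
Local Open Scope ring_scope.

Section Aux.
Variable R : idomainType.

Definition E2 n (i j : 'I_n) (x y z t : R) : 'M[R]_n :=
  \matrix_(k, l) if k == i then (if l == i then x else if l == j then y else 0)
                 else if k == j then (if l == i then z else if l == j then t else 0)
                 else (k == l)%:R.

Lemma E2_mul n m (i j : 'I_n) x y z t (M : 'M[R]_(n, m)) k l : i != j ->
  (E2 i j x y z t *m M) k l =
  if k == i then x * M i l + y * M j l
  else if k == j then z * M i l + t * M j l else M k l.
Proof.
move=> ij; have ji : j != i by rewrite eq_sym.
rewrite mxE (bigD1 i) // (bigD1 j) //=. rewrite !mxE !eqxx (negbTE ji).
case: (k =P i) => [->|ki].
  rewrite big1 ?addr0 // => p /andP [pi pj]; rewrite mxE eqxx (negbTE pi) (negbTE pj) mul0r //.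
case: (k =P j) => [->|kj].
  rewrite big1 ?addr0 // => p /andP [pi pj]; rewrite mxE eqxx (negbTE pi) (negbTE pj) (negbTE ji) mul0r //.
have kin : k != i by apply/eqP.
have kjn : k != j by apply/eqP.
rewrite !mul0r !add0r (bigD1 k) /=; last by rewrite kin kjn.
rewrite mxE (negbTE kin) (negbTE kjn) eqxx mul1r big1 ?addr0 // => p /andP [/andP [pi pj] pk].
rewrite mxE (negbTE kin) (negbTE kjn) eq_sym (negbTE pk) mul0r //.
Qed.


Lemma E2_mulE n (i j : 'I_n) x y z t x' y' z' t' : i != j ->
  E2 i j x y z t *m E2 i j x' y' z' t' =
  E2 i j (x * x' + y * z') (x * y' + y * t') (z * x' + t * z') (z * y' + t * t').
Proof.
move=> ij; have ji : j != i by rewrite eq_sym.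
apply/matrixP => k l; rewrite E2_mul // ![E2 _ _ _ _ _ _ _ _ in RHS]mxE !mxE !eqxx (negbTE ji).
by do ![case: eqP => /= [?|?]; try subst]; rewrite ?eqxx ?mulr0 ?addr0 ?mul0r ?add0r // in ij ji *.
Qed.

Lemma E2_1 n (i j : 'I_n) : i != j -> E2 i j 1 0 0 1 = 1%:M.
Proof.
move=> ij; apply/matrixP => k l; rewrite !mxE.
by do ![case: eqP => /= [?|?]; try subst]; rewrite ?eqxx // in ij *.
Qed.

Hypothesis bz : bezout_domain R.

Lemma bezout2 (a b : R) : (a = 0 /\ b = 0) \/
  exists d x y a' b', [/\ a = d * a', b = d * b' & x * a' + y * b' = 1].
Proof.
have [d H] := bz [:: a; b].
have [a' Ha] : exists r, a = r * d.
  apply/H; exists (fun i : 'I_2 => if i == 0 then 1 else 0).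
  by rewrite !big_ord_recl big_ord0 /= mul1r mul0r !addr0.
have [b' Hb] : exists r, b = r * d.
  apply/H; exists (fun i : 'I_2 => if i == 0 then 0 else 1).
  by rewrite !big_ord_recl big_ord0 /= mul1r mul0r add0r addr0.
have [c Hc] : in_fg_ideal [:: a; b] d by apply/H; exists 1; rewrite mul1r.
move: Hc; rewrite !big_ord_recl big_ord0 /= addr0 => Hd.
case: (d =P 0) => [d0|/eqP dn0].
  by left; rewrite Ha Hb d0 !mulr0.
right; exists d, (c ord0), (c (lift ord0 ord0)), a', b'.
split; [by rewrite mulrC | by rewrite mulrC |].
apply: (mulIf dn0); rewrite mul1r mulrDl -!mulrA -Ha -Hb.
by rewrite [RHS]Hd.
Qed.


Lemma hermite n (w : 'cV[R]_n.+1) : exists U V : 'M[R]_n.+1,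
  V *m U = 1%:M /\ forall i : 'I_n.+1, i != ord0 -> (U *m w) i 0 = 0.
Proof.
suff H: forall k, (k <= n)%N -> exists U V : 'M[R]_n.+1, V *m U = 1%:M /\
    forall i : 'I_n.+1, (0 < i <= k)%N -> (U *m w) i 0 = 0.
  have [U [V [VU HU]]] := H n (leqnn n); exists U, V; split => // i i0.
  apply: HU; apply/andP; split; last by rewrite -ltnS ltn_ord.
  rewrite lt0n; by move: i0; apply: contra => /eqP h; apply/eqP/val_inj.
elim=> [_|k IH kn].
  exists 1%:M, 1%:M; split; first by rewrite mulmx1.
  by move=> [[|i] ?] /andP [].
have [U [V [VU HU]]] := IH (ltnW kn).
set v := U *m w in HU *.
pose j : 'I_n.+1 := Ordinal (kn : (k.+1 < n.+1)%N).
have j0 : ord0 != j by rewrite -val_eqE.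
case: (bezout2 (v ord0 0) (v j 0)) => [[a0 b0] | [d [x [y [a' [b' [ea eb exy]]]]]]].
  exists U, V; split => // i /andP [i0 ik]; rewrite leq_eqVlt in ik.
  case/orP: ik => [/eqP ik | ik]; last by apply: HU; rewrite i0.
  by have -> : i = j by apply: val_inj.
exists (E2 ord0 j x y (-b') a' *m U), (V *m E2 ord0 j a' (-y) b' x); split.
  rewrite mulmxA -(mulmxA V) E2_mulE //.
  have -> : a' * x + - y * - b' = 1 by rewrite mulrNN mulrC.
  have -> : a' * y + - y * a' = 0 by rewrite mulNr mulrC subrr.
  have -> : b' * x + x * - b' = 0 by rewrite mulrN mulrC subrr.
  have -> : b' * y + x * a' = 1 by rewrite addrC (mulrC b').
  by rewrite E2_1 // mulmx1.
move=> i /andP [i0 ik]; rewrite -mulmxA -/v E2_mul //.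
have -> : (i == ord0) = false by apply/negbTE; rewrite -val_eqE /= -lt0n.
case: (i =P j) => [_|ij].
  by rewrite ea eb mulNr mulrCA (mulrC b') mulrCA addNr.
apply: HU; rewrite i0 /=; rewrite leq_eqVlt in ik; case/orP: ik => // /eqP ik.
by case: ij; apply: val_inj.
Qed.

Lemma pid_block n r : block_mx (1%:M : 'M[R]_1) 0 0 (pid_mx r : 'M_n) = pid_mx r.+1 :> 'M_(1+n).
Proof.
apply/matrixP => i j; rewrite !mxE.
case: splitP => i' ->; rewrite !mxE; case: splitP => j' ->; rewrite !mxE ?ord1 //=.

Qed.

Lemma idem_nf n (P : 'M[R]_n) : P *m P = P ->
  exists S V : 'M[R]_n, exists r, [/\ V *m S = 1%:M, (r <= n)%N & V *m P *m S = pid_mx r].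
Proof.
elim: n P => [|n IH] P PP.
  by exists 1%:M, 1%:M, 0%N; split; rewrite ?mulmx1 //; apply/matrixP => [[]].
case: (eqVneq P 0) => [->|Pn0].
  by exists 1%:M, 1%:M, 0%N; split; rewrite ?pid_mx_0 ?mulmx1 ?mulmx0.
case/matrix0Pn: Pn0 => i [j Pij].
set w := col j P.
have Pw : P *m w = w by rewrite /w colE mulmxA PP.
have [U [V [VU HU]]] := hermite w.
have UV : U *m V = 1%:M by apply: mulmx1C.
pose e0 : 'cV[R]_n.+1 := delta_mx 0 0.
set d := (U *m w) 0 0.
have Uw : U *m w = d *: e0.
  apply/matrixP => a b; rewrite ord1 [in RHS]mxE [e0 _ _]mxE eqxx andbT.
  case: (a =P 0) => [->|a0]; first by rewrite mulr1.
  by rewrite HU ?mulr0 //; apply/eqP.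
set u := V *m e0.
have wd : w = d *: u.
  by rewrite /u scalemxAr -Uw mulmxA VU mul1mx.
have d0 : d != 0.
  apply/eqP => d0; move: Pij; rewrite (_ : P i j = w i 0); last by rewrite mxE.
  by rewrite wd d0 scale0r mxE eqxx.
have Pu : P *m u = u.
  move: Pw; rewrite wd -scalemxAr => /matrixP H; apply/matrixP => a b.
  by move: (H a b); rewrite !mxE => /(mulfI d0).
set M := U *m P *m V.
have Me : M *m e0 = e0 by rewrite /M -mulmxA -/u -mulmxA Pu /u mulmxA UV mul1mx.
have MM : M *m M = M.
  by rewrite /M !mulmxA -(mulmxA _ V U) VU mulmx1 -(mulmxA U P P) PP.
have Mcol : forall a, M a 0 = e0 a 0.
  move=> a; have := congr1 (fun X : 'cV[R]_n.+1 => X a 0) Me; rewrite /= /e0 -colE mxE; exact.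
have HMdef : M = U *m P *m V by [].
clearbody M.
pose M' : 'M[R]_(1 + n) := M.
have l0 : lshift n (0 : 'I_1) = (ord0 : 'I_n.+1) by apply: val_inj.
set r := ursubmx M'; set P' := drsubmx M'.
have HM : M' = block_mx 1%:M r 0 P'.
  rewrite -{1}[M']submxK; congr block_mx.
    apply/matrixP => a b; rewrite !ord1 !mxE /M' l0 Mcol !mxE //.
  apply/matrixP => a b; rewrite !ord1 !mxE /M' l0 Mcol !mxE.
  by have -> : (rshift 1 a == ord0 :> 'I_n.+1) = false by rewrite -val_eqE.
have MM' : M' *m M' = M' by exact: MM.
move: MM'; rewrite HM mulmx_block !mul1mx !mulmx1 !mul0mx !mulmx0 !addr0 !add0r.
move/eq_block_mx => [_ rP _ P'P'].
have rP0 : r *m P' = 0 by apply: (addrI r); rewrite addr0.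
have [S' [V' [r0 [VS' r0n HP']]]] := IH P' P'P'.
pose T : 'M[R]_(1+n) := block_mx 1%:M (-r) 0 1%:M.
pose Ti : 'M[R]_(1+n) := block_mx 1%:M r 0 1%:M.
pose B : 'M[R]_(1+n) := block_mx 1%:M 0 0 S'.
pose B' : 'M[R]_(1+n) := block_mx 1%:M 0 0 V'.
have TiT : Ti *m T = 1%:M.
  by rewrite /Ti /T mulmx_block !mul1mx !mulmx1 !mul0mx !mulmx0 !addr0 !add0r addNr -scalar_mx_block.
have B'B : B' *m B = 1%:M.
  by rewrite /B' /B mulmx_block !mul1mx !mulmx1 !mul0mx !mulmx0 !addr0 !add0r VS' -scalar_mx_block.
have TMT : Ti *m M' *m T = block_mx 1%:M 0 0 P'.
  rewrite HM /Ti /T mulmx_block !mul1mx !mulmx1 !mul0mx !mulmx0 !addr0 !add0r rP0 addr0.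
  by rewrite mulmx_block !mul1mx !mulmx1 !mul0mx !mulmx0 !addr0 !add0r addNr.
have BPB : B' *m block_mx 1%:M 0 0 P' *m B = pid_mx r0.+1.
  rewrite /B' /B mulmx_block !mul1mx !mulmx1 !mul0mx !mulmx0 !addr0 !add0r.
  by rewrite mulmx_block !mul1mx !mulmx1 !mul0mx !mulmx0 !addr0 !add0r HP' pid_block.
exists (V *m (T *m B)), (B' *m Ti *m U), r0.+1; split => //.
  rewrite !mulmxA -(mulmxA _ U V) UV mulmx1 -(mulmxA B' Ti T) TiT mulmx1.
  exact: B'B.
rewrite -BPB -TMT /M' HMdef !mulmxA //.
Qed.

End Aux.
Lemma rank_mid (F : fieldType) n (M N K : 'M[F]_n) : (\rank (M *m N *m K) <= \rank N)%N.
Proof. exact: leq_trans (mxrankM_maxl _ _) (mxrankM_maxr _ _). Qed.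

Lemma rank_chain (F : fieldType) n (A B C X Y : 'M[F]_n) :
  A *m B *m A = A *m C *m A ->
  is_group_inverse (A *m B) X -> is_group_inverse (C *m A) Y ->
  \rank (A *m B *m X) = \rank (C *m A *m Y).
Proof.
move=> H [X1 X2 X3] [Y1 Y2 Y3].
have e1 : \rank (A *m B *m X) = \rank (A *m B).
  apply/eqP; rewrite eqn_leq mxrankM_maxl /=.
  by rewrite -{1}X3 mxrankM_maxl.
have e2 : \rank (C *m A *m Y) = \rank (C *m A).
  apply/eqP; rewrite eqn_leq mxrankM_maxl /=.
  by rewrite -{1}Y3 mxrankM_maxl.
have e3 : \rank (A *m B) = \rank (A *m B *m A).
  apply/eqP; rewrite eqn_leq mxrankM_maxl andbT.
  have E : A *m B = X *m (A *m B *m A) *m B.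
    by rewrite -{1}X3 X1 !mulmxA.
  rewrite {1}E.
  exact: rank_mid.
have e4 : \rank (C *m A) = \rank (A *m C *m A).
  have L : (\rank (A *m C *m A) <= \rank (C *m A))%N by rewrite -mulmxA mxrankM_maxr.
  apply/eqP; rewrite eqn_leq L andbT.
  have E : C *m A = C *m (A *m C *m A) *m Y.
    by rewrite -{1}Y3 -[C *m A *m Y *m _]mulmxA -Y1 !mulmxA.
  rewrite {1}E.
  exact: rank_mid.
by rewrite e1 e2 e3 e4 H.
Qed.

Lemma nf_eq (R : idomainType) n (P S V : 'M[R]_n) k :
  V *m S = 1%:M -> V *m P *m S = pid_mx k -> P = S *m pid_mx k *m V.
Proof.
move=> VS HPk; have SV : S *m V = 1%:M := mulmx1C VS.
by rewrite -HPk !mulmxA SV mul1mx -mulmxA SV mulmx1.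
Qed.

Lemma nf_rank (R : idomainType) n (P S V : 'M[R]_n) k :
  V *m S = 1%:M -> (k <= n)%N -> V *m P *m S = pid_mx k ->
  \rank (map_mx (@FracField.tofrac R) P) = k.
Proof.
move=> VS kn HPk.
have Hk : \rank (map_mx (@FracField.tofrac R) (pid_mx k : 'M[R]_n)) = k.
  by rewrite map_pid_mx rank_pid_mx.
apply/eqP; rewrite eqn_leq; apply/andP; split.
  by rewrite (nf_eq VS HPk) -[X in (_ <= X)%N]Hk !map_mxM rank_mid.
by rewrite -[X in (X <= _)%N]Hk -HPk !map_mxM rank_mid.
Qed.

Theorem corollary3p3 (R : idomainType) (n : nat) (A B C : 'M[R]_n) :
  bezout_domain R ->
  A *m B *m A = A *m C *m A ->
  group_invertible (A *m B) -> group_invertible (C *m A) ->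
  forall X Y : 'M[R]_n,
    is_group_inverse (A *m B) X -> is_group_inverse (C *m A) Y ->
    similar_mx ((A *m B) *m X) ((C *m A) *m Y).
Proof.
move=> bz HABA _ _ X Y GX GY.
have PP : (A *m B *m X) *m (A *m B *m X) = A *m B *m X.
  by case: GX => _ _ X3; rewrite mulmxA X3.
have QQ : (C *m A *m Y) *m (C *m A *m Y) = C *m A *m Y.
  by case: GY => _ _ Y3; rewrite mulmxA Y3.
have [S1 [V1 [r [VS1 rn HP]]]] := idem_nf bz PP.
have [S2 [V2 [s [VS2 sn HQ]]]] := idem_nf bz QQ.
have rs : r = s.
  rewrite -(nf_rank VS1 rn HP) -(nf_rank VS2 sn HQ) !map_mxM.
  apply: rank_chain.
  - by rewrite -!map_mxM HABA.
  - by case: GX => [X1 X2 X3]; split; rewrite -!map_mxM ?X3 ?X2 ?X1.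
  - by case: GY => [Y1 Y2 Y3]; split; rewrite -!map_mxM ?Y3 ?Y2 ?Y1.
subst s.
have E : (S2 *m V1) *m (S1 *m V2) = 1%:M.
  by rewrite mulmxA -(mulmxA S2 V1 S1) VS1 mulmx1 (mulmx1C VS2).
have U := (mulmx1_unit E).1.
have Hinv : invmx (S2 *m V1) = S1 *m V2.
  by rewrite -[LHS]mulmx1 -E (mulmxA (invmx (S2 *m V1))) (mulVmx U) mul1mx.
exists (S2 *m V1) => //.
rewrite Hinv (nf_eq VS1 HP) (nf_eq VS2 HQ) !mulmxA.
by rewrite -(mulmxA S1 V2 S2) VS2 mulmx1 -(mulmxA (S1 *m pid_mx r) V2 S2) VS2 mulmx1.
Qed.
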